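(* Let $\mathcal{H}$ be a complex Hilbert space and $B \in \mathcal{B}(\mathcal{H})$ invertible. The following are equivalent: (a) $B = MN - NM$ for some $M, N \in \mathcal{B}(\mathcal{H})$ with $M^2 = 0 = N^2$; (b) there exist a Hilbert space $\mathcal{K}$ and an invertible operator $A_0 \in \mathcal{B}(\mathcal{K})$ such that $B$ is similar to $A_0 \oplus (-A_0)$ acting on $\mathcal{K} \oplus \mathcal{K}$ (i.e. $S^{-1} B S = A_0 \oplus (-A_0)$ for some invertible $S : \mathcal{K} \oplus \mathcal{K} \to \mathcal{H}$). *)

(* Defs.v *)
From HB Require Import structures.
From mathcomp Require Import all_boot all_order all_algebra.
From mathcomp Require Import complex.
From mathcomp Require Import reals.
Set Implicit Arguments. Unset Strict Implicit. Unset Printing Implicit Defensive.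
Import Order.TTheory GRing.Theory Num.Theory.
Local Open Scope ring_scope.

Section Hilbert.
Variable R : realType.
Local Notation C := R[i].

Definition is_inner_product (V : lmodType C) (ip : V -> V -> C) : Prop :=
  [/\ forall (a : C) (x y z : V), ip (a *: x + y) z = a * ip x z + ip y z,
      forall x y : V, ip y x = (ip x y)^*,
      forall x : V, 0 <= ip x x
    & forall x : V, ip x x = 0 -> x = 0].

(* the induced norm (a nonnegative real, viewed inside C) *)
Definition ipnorm (V : lmodType C) (ip : V -> V -> C) (x : V) : C := sqrtC (ip x x).

Definition ip_complete (V : lmodType C) (ip : V -> V -> C) : Prop :=
  forall u : nat -> V,
    (forall e : C, 0 < e -> exists N, forall m n, (N <= m)%N -> (N <= n)%N ->
        ipnorm ip (u m - u n) < e) ->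
    exists l : V, forall e : C, 0 < e -> exists N, forall n, (N <= n)%N ->
        ipnorm ip (u n - l) < e.

Definition is_Hilbert (V : lmodType C) (ip : V -> V -> C) : Prop :=
  is_inner_product ip /\ ip_complete ip.

Definition bounded_op (V W : lmodType C) (ipV : V -> V -> C) (ipW : W -> W -> C)
    (T : V -> W) : Prop :=
  [/\ forall x y : V, T (x + y) = T x + T y,
      forall (a : C) (x : V), T (a *: x) = a *: T x
    & exists c : C, forall x : V, ipnorm ipW (T x) <= c * ipnorm ipV x].

Definition bounded_inverse (V W : lmodType C) (ipV : V -> V -> C) (ipW : W -> W -> C)
    (T : V -> W) (Ti : W -> V) : Prop :=
  [/\ bounded_op ipV ipW T, bounded_op ipW ipV Ti,
      forall x : V, Ti (T x) = x & forall y : W, T (Ti y) = y].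

Definition invertible_op (V W : lmodType C) (ipV : V -> V -> C) (ipW : W -> W -> C)
    (T : V -> W) : Prop :=
  exists Ti : W -> V, bounded_inverse ipV ipW T Ti.

(* orthogonal direct sum K (+) K, carried by the product module K * K *)
Definition ip_sum (K : lmodType C) (ip : K -> K -> C) (p q : (K * K)%type) : C :=
  ip p.1 q.1 + ip p.2 q.2.

Definition dsum_neg (K : lmodType C) (A0 : K -> K) (p : (K * K)%type) : (K * K)%type :=
  (A0 p.1, - A0 p.2).

End Hilbert.

(* Main.v *)
Require Import Defs.
From HB Require Import structures.
From mathcomp Require Import all_boot all_order all_algebra.
From mathcomp Require Import complex.
From mathcomp Require Import reals.
From mathcomp Require Import ring.
Set Implicit Arguments. Unset Strict Implicit. Unset Printing Implicit Defensive.
Import Order.TTheory GRing.Theory Num.Theory.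
Local Open Scope ring_scope.

Section Gen.
Variable R : realType.
Local Notation C := R[i].

Definition islin (V W : lmodType C) (T : V -> W) :=
  (forall x y, T (x + y) = T x + T y) /\ (forall (a : C) x, T (a *: x) = a *: T x).

Lemma lin0 (V W : lmodType C) (T : V -> W) :
  (forall x y, T (x + y) = T x + T y) -> T 0 = 0.
Proof.
move=> h; have e := h 0 0; rewrite addr0 in e.
have := congr1 (fun z => z - T 0) e; rewrite subrr addrK => ->; by [].
Qed.

Lemma linN (V W : lmodType C) (T : V -> W) :
  (forall x y, T (x + y) = T x + T y) -> forall x, T (- x) = - T x.
Proof.
move=> h x; have h0 : T (- x) + T x = 0 by rewrite -h addNr lin0.
by move/eqP: h0; rewrite addr_eq0 => /eqP.
Qed.

Lemma linB (V W : lmodType C) (T : V -> W) :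
  (forall x y, T (x + y) = T x + T y) -> forall x y, T (x - y) = T x - T y.
Proof. by move=> h x y; rewrite h linN. Qed.

Definition nonneg (V : lmodType C) (ip : V -> V -> C) := forall x, 0 <= ip x x.

Definition sqb (V W : lmodType C) (ipV : V -> V -> C) (ipW : W -> W -> C)
  (T : V -> W) (k : C) := 0 <= k /\ forall x, ipW (T x) (T x) <= k * ipV x x.

Lemma bnd_sq (V W : lmodType C) (ipV : V -> V -> C) (ipW : W -> W -> C) (T : V -> W) :
  nonneg ipV -> nonneg ipW ->
  (exists c : C, forall x : V, ipnorm ipW (T x) <= c * ipnorm ipV x) ->
  exists k, sqb ipV ipW T k.
Proof.
move=> hV hW [c hc]; exists (`|c| ^+ 2); split; first by rewrite exprn_ge0.
move=> x.
have ha : 0 <= ipnorm ipW (T x) by rewrite /ipnorm sqrtC_ge0.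
have hn : 0 <= ipnorm ipV x by rewrite /ipnorm sqrtC_ge0.
have h1 := hc x.
have hcn : 0 <= c * ipnorm ipV x by apply: le_trans h1.
have e : c * ipnorm ipV x = `|c| * ipnorm ipV x.
  by rewrite -[LHS]ger0_norm // normrM (ger0_norm hn).
rewrite e in h1.
have h2 : ipnorm ipW (T x) ^+ 2 <= (`|c| * ipnorm ipV x) ^+ 2.
  by rewrite ler_pXn2r // ?nnegrE // mulr_ge0.
by move: h2; rewrite exprMn /ipnorm !sqrtCK.
Qed.

Lemma sq_bnd (V W : lmodType C) (ipV : V -> V -> C) (ipW : W -> W -> C) (T : V -> W) k :
  nonneg ipV -> nonneg ipW -> sqb ipV ipW T k ->
  exists2 c : C, 0 <= c & forall x : V, ipnorm ipW (T x) <= c * ipnorm ipV x.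
Proof.
move=> hV hW [hk hT]; exists (sqrtC k); first by rewrite sqrtC_ge0.
move=> x; rewrite /ipnorm -sqrtCM ?nnegrE //.
by rewrite ler_sqrtC ?nnegrE // mulr_ge0.
Qed.

Lemma sqb_comp (U V W : lmodType C) (ipU : U -> U -> C) (ipV : V -> V -> C)
   (ipW : W -> W -> C) (T : U -> V) (S : V -> W) k1 k2 :
  sqb ipU ipV T k1 -> sqb ipV ipW S k2 -> sqb ipU ipW (fun x => S (T x)) (k2 * k1).
Proof.
move=> [h1 hT] [h2 hS]; split; first by rewrite mulr_ge0.
move=> x; apply: le_trans (hS _) _; rewrite -mulrA; exact: ler_wpM2l.
Qed.

Lemma islin_comp (U V W : lmodType C) (T : U -> V) (S : V -> W) :
  islin T -> islin S -> islin (fun x => S (T x)).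
Proof. by move=> [h1 h2] [h3 h4]; split=> *; rewrite ?h1 ?h2 ?h3 ?h4. Qed.

Lemma mk_bounded (V W : lmodType C) (ipV : V -> V -> C) (ipW : W -> W -> C) (T : V -> W) k :
  nonneg ipV -> nonneg ipW -> islin T -> sqb ipV ipW T k -> bounded_op ipV ipW T.
Proof.
move=> hV hW [h1 h2] hs; split => //.
by have [c _ hc] := sq_bnd hV hW hs; exists c.
Qed.

Lemma of_bounded (V W : lmodType C) (ipV : V -> V -> C) (ipW : W -> W -> C) (T : V -> W) :
  nonneg ipV -> nonneg ipW -> bounded_op ipV ipW T -> islin T /\ exists k, sqb ipV ipW T k.
Proof. by move=> hV hW [h1 h2 h3]; split; [split | exact: bnd_sq]. Qed.

Section IP.
Variables (V : lmodType C) (ip : V -> V -> C).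
Hypothesis hip : is_inner_product ip.

Lemma ip_nonneg : nonneg ip. Proof. by case: hip. Qed.
Lemma ipDl x y z : ip (x + y) z = ip x z + ip y z.
Proof. by case: hip => h _ _ _; rewrite -{1}[x]scale1r h mul1r. Qed.
Lemma ipNl x z : ip (- x) z = - ip x z.
Proof.
have h0 : ip 0 z = 0.
  have e := ipDl 0 0 z; rewrite addr0 in e.
  by have := congr1 (fun w => w - ip 0 z) e; rewrite subrr addrK.
have h1 : ip (- x) z + ip x z = 0 by rewrite -ipDl addNr.
by move/eqP: h1; rewrite addr_eq0 => /eqP.
Qed.
Lemma ipDr x y z : ip z (x + y) = ip z x + ip z y.
Proof. by case: hip => _ h _ _; rewrite (h x z) (h y z) [ip z (x + y)]h ipDl rmorphD. Qed.
Lemma ipNr x z : ip z (- x) = - ip z x.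
Proof. by case: hip => _ h _ _; rewrite (h x z) [ip z (- x)]h ipNl rmorphN. Qed.
Lemma ip_opp x : ip (- x) (- x) = ip x x.
Proof. by rewrite ipNl ipNr opprK. Qed.
Lemma ip_par x y : ip (x + y) (x + y) <= 2 * (ip x x + ip y y).
Proof.
have e : ip (x + y) (x + y) + ip (x - y) (x - y) = 2 * (ip x x + ip y y).
  rewrite !ipDl !ipDr !ipNl !ipNr. ring.
rewrite -e lerDl; exact: ip_nonneg.
Qed.
End IP.

Lemma ineqS (a c b kN : C) : 0 <= a -> 0 <= c -> 0 <= kN -> b <= kN * c ->
  2 * (a + b) <= (2 + 2 * kN) * (a + c).
Proof.
move=> ha hc hk hb; apply: (le_trans (y := 2 * (a + kN * c))).
  by apply: ler_wpM2l => //; rewrite lerD2l.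
rewrite -subr_ge0.
have -> : (2 + 2 * kN) * (a + c) - 2 * (a + kN * c) = 2 * kN * a + 2 * c by ring.
by rewrite addr_ge0 // mulr_ge0 // mulr_ge0.
Qed.

End Gen.
Section SubSp.
Variables (F : pzRingType) (H : lmodType F) (P : pred H).
Definition PDprop := forall a x y, P x -> P y -> P (a *: x + y).
Record subspR (P0 : P 0) (PD : PDprop) := SubSp { spval : H; spvalP : P spval }.
Scheme subspR_rect := Induction for subspR Sort Type.
Variables (P0 : P 0) (PD : PDprop).
Local Notation subsp := (subspR P0 PD).
HB.instance Definition _ := [isSub for (@spval P0 PD)].
HB.instance Definition _ := [Choice of subsp by <:].

Lemma PA x y : P x -> P y -> P (x + y).
Proof. by move=> hx hy; have := PD 1 hx hy; rewrite scale1r. Qed.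
Lemma PZ a x : P x -> P (a *: x).
Proof. by move=> hx; have := PD a hx P0; rewrite addr0. Qed.
Lemma PN x : P x -> P (- x).
Proof. by move=> hx; have := PZ (-1) hx; rewrite scaleN1r. Qed.

Definition s0 : subsp := @SubSp P0 PD 0 P0.
Definition sadd (x y : subsp) : subsp := SubSp _ _ (PA (spvalP x) (spvalP y)).
Definition sopp (x : subsp) : subsp := SubSp _ _ (PN (spvalP x)).
Definition sscale a (x : subsp) : subsp := SubSp _ _ (PZ a (spvalP x)).

Lemma saddA : associative sadd.
Proof. by move=> x y z; apply: val_inj; rewrite /= addrA. Qed.
Lemma saddC : commutative sadd.
Proof. by move=> x y; apply: val_inj; rewrite /= addrC. Qed.
Lemma sadd0 : left_id s0 sadd.
Proof. by move=> x; apply: val_inj; rewrite /= add0r. Qed.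
Lemma saddN : left_inverse s0 sopp sadd.
Proof. by move=> x; apply: val_inj; rewrite /= addNr. Qed.
HB.instance Definition _ := GRing.isZmodule.Build subsp saddA saddC sadd0 saddN.

Lemma sscaleA a b v : sscale a (sscale b v) = sscale (a * b) v.
Proof. by apply: val_inj; rewrite /= scalerA. Qed.
Lemma sscale1 : left_id 1 sscale.
Proof. by move=> x; apply: val_inj; rewrite /= scale1r. Qed.
Lemma sscaleDr : right_distributive sscale +%R.
Proof. by move=> a x y; apply: val_inj; rewrite /= scalerDr. Qed.
Lemma sscaleDl v : {morph sscale^~ v: a b / a + b}.
Proof. by move=> a b; apply: val_inj; rewrite /= scalerDl. Qed.
HB.instance Definition _ := GRing.Zmodule_isLmodule.Build F subsp sscaleA sscale1 sscaleDr sscaleDl.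

Lemma spval_add (x y : subsp) : spval (x + y) = spval x + spval y. Proof. by []. Qed.
Lemma spval_opp (x : subsp) : spval (- x) = - spval x. Proof. by []. Qed.
Lemma spval_scale a (x : subsp) : spval (a *: x) = a *: spval x. Proof. by []. Qed.
Lemma spval_zero : spval (0 : subsp) = 0. Proof. by []. Qed.
End SubSp.

Lemma dir_ba (R : realType) (H : lmodType R[i]) (ipH : H -> H -> R[i])
  (hH : is_Hilbert ipH) (B : H -> H) :
  (exists (K : lmodType R[i]) (ipK : K -> K -> R[i]) (A0 : K -> K),
      [/\ is_Hilbert ipK, invertible_op ipK ipK A0
        & exists (S : (K * K)%type -> H) (Si : H -> (K * K)%type),
            bounded_inverse (ip_sum ipK) ipH S Si /\
            forall p, Si (B (S p)) = dsum_neg A0 p]) ->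
  (exists M N : H -> H,
      [/\ bounded_op ipH ipH M, bounded_op ipH ipH N,
          (forall x, M (M x) = 0), (forall x, N (N x) = 0)
        & forall x, B x = M (N x) - N (M x)]).
Proof.
move=> [K [ipK [A0 [[hK _] [A0i [hA0 _ _ _]] [S [Si [[hS hSi SiS SSi] hBS]]]]]]].
have nK := ip_nonneg hK.
have nH := ip_nonneg hH.1.
have nS : nonneg (ip_sum ipK) by move=> p; rewrite /ip_sum addr_ge0.
have [[SD SZ] [kS sS]] := of_bounded nS nH hS.
have [[SiD SiZ] [kSi sSi]] := of_bounded nH nS hSi.
have [[AD AZ] [kA [hkA sA]]] := of_bounded nK nK hA0.
have A00 := lin0 AD.
have S0 := lin0 SD.
set M0 := fun p : (K * K)%type => (A0 p.2, (0 : K)).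
set N0 := fun p : (K * K)%type => ((0 : K), p.1).
have lM0 : islin M0.
  split=> [p q|a p]; rewrite /M0 /=; congr pair; rewrite /= ?AD ?AZ ?addr0 ?scaler0 //.
have lN0 : islin N0.
  split=> [p q|a p]; rewrite /N0 /=; congr pair; rewrite /= ?addr0 ?scaler0 //.
have sM0 : sqb (ip_sum ipK) (ip_sum ipK) M0 kA.
  split=> // p; rewrite /M0 /ip_sum /=.
  have e0 : ipK 0 0 = 0 by rewrite -[X in ipK X _](subrr (0 : K)) (ipDl hK) (ipNl hK) subrr.
  rewrite e0 addr0 mulrDr; apply: le_trans (sA _) _; rewrite lerDr mulr_ge0 //.
have sN0 : sqb (ip_sum ipK) (ip_sum ipK) N0 1.
  split=> // p; rewrite /N0 /ip_sum /= mul1r.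
  have e0 : ipK 0 0 = 0 by rewrite -[X in ipK X _](subrr (0 : K)) (ipDl hK) (ipNl hK) subrr.
  by rewrite e0 add0r addrC lerDr.
exists (fun h => S (M0 (Si h))), (fun h => S (N0 (Si h))); split.
- apply: (mk_bounded nH nH); first by apply: islin_comp; [apply: islin_comp|].
  by apply: sqb_comp; [apply: sqb_comp; [exact: sSi|exact: sM0]|exact: sS].
- apply: (mk_bounded nH nH); first by apply: islin_comp; [apply: islin_comp|].
  by apply: sqb_comp; [apply: sqb_comp; [exact: sSi|exact: sN0]|exact: sS].
- by move=> x; rewrite SiS /M0 /= A00; exact: S0.
- by move=> x; rewrite SiS /N0 /=; exact: S0.
move=> x; rewrite !SiS /M0 /N0 /= -(linB SD).
rewrite -{1}[x]SSi -[B (S (Si x))]SSi hBS /dsum_neg; congr S; congr pair; rewrite /= ?subr0 ?sub0r //.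
Qed.

Lemma dir_ab (R : realType) (H : lmodType R[i]) (ipH : H -> H -> R[i])
  (hH : is_Hilbert ipH) (B : H -> H) (hB : invertible_op ipH ipH B) :
  (exists M N : H -> H,
      [/\ bounded_op ipH ipH M, bounded_op ipH ipH N,
          (forall x, M (M x) = 0), (forall x, N (N x) = 0)
        & forall x, B x = M (N x) - N (M x)]) ->
  (exists (K : lmodType R[i]) (ipK : K -> K -> R[i]) (A0 : K -> K),
      [/\ is_Hilbert ipK, invertible_op ipK ipK A0
        & exists (S : (K * K)%type -> H) (Si : H -> (K * K)%type),
            bounded_inverse (ip_sum ipK) ipH S Si /\
            forall p, Si (B (S p)) = dsum_neg A0 p]).
Proof.
move: hB => [Bi [hBb hBib BiB BBi]] [M [N [hMb hNb MM NN hBMN]]].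
have [hip hcomp] := hH.
have nH := ip_nonneg hip.
have [[MD MZ] [kM sM]] := of_bounded nH nH hMb.
have [[ND NZ] [kN sN]] := of_bounded nH nH hNb.
have [[BD BZ] [kB sB]] := of_bounded nH nH hBb.
have [[BiD BiZ] [kBi sBi]] := of_bounded nH nH hBib.
have M0 := lin0 MD; have N0 := lin0 ND; have MN := linN MD; have NN' := linN ND.
have BiN' := linN BiD.
have BM x : B (M x) = - M (B x).
  by rewrite !hBMN MM N0 subr0 (linB MD) MM sub0r opprK.
have BN x : B (N x) = - N (B x).
  by rewrite !hBMN NN M0 sub0r (linB ND) NN subr0.
have BiM x : Bi (M x) = - M (Bi x).
  by rewrite -{1}[x]BBi -[M (B (Bi x))]opprK -BM BiN' BiB.
have BiNx x : Bi (N x) = - N (Bi x).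
  by rewrite -{1}[x]BBi -[N (B (Bi x))]opprK -BN BiN' BiB.
have BiMN x : Bi (M (N x)) = M (N (Bi x)).
  by rewrite BiM BiNx MN opprK.
have MNB x : M (N (B x)) = M (N (M (N x))).
  by rewrite hBMN (linB ND) NN (linB MD) M0 subr0.
have MNM x : M (N (M x)) = - M (B x).
  by rewrite hBMN (linB MD) MM sub0r opprK.
set E := fun x => M (N (Bi x)).
have lE : islin E by apply: islin_comp => //; apply: islin_comp.
have [ED EZ] := lE.
have EE x : E (E x) = E x.
  by rewrite /E /= BiMN -MNB BBi.
have EB x : E (B x) = B (E x).
  by rewrite /E /= BiB BM BN MN opprK BBi.
have EBi x : E (Bi x) = Bi (E x).
  by rewrite /E /= BiMN.
have EM x : E (M x) = M x.
  by rewrite /E /= BiM NN' MN MNM opprK BBi.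
have EN x : E (N x) = 0.
  by rewrite /E /= BiNx NN' MN NN M0 oppr0.
set P : pred H := [pred x | E x == x].
have P0 : P 0 by rewrite /P inE (lin0 ED).
have PD : PDprop P.
  move=> a x y; rewrite /P !inE => /eqP hx /eqP hy.
  by rewrite ED EZ hx hy.
pose K := subspR P0 PD.
have Efix (x : K) : E (spval x) = spval x by have := spvalP x; rewrite /P inE => /eqP.
pose ipK := fun x y : K => ipH (spval x) (spval y).
have PB (x : K) : P (B (spval x)) by rewrite /P inE EB Efix.
have PBi (x : K) : P (Bi (spval x)) by rewrite /P inE EBi Efix.
have PE h : P (E h) by rewrite /P inE EE.
have PMB h : P (- M (Bi h)) by rewrite /P inE (linN ED) EM.
pose A0 := fun x : K => @SubSp _ H P P0 PD (B (spval x)) (PB x).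
pose A0i := fun x : K => @SubSp _ H P P0 PD (Bi (spval x)) (PBi x).
have nK : nonneg ipK by move=> x; exact: nH.
have hipK : is_inner_product ipK.
  case: hip => h1 h2 h3 h4; split.
  - by move=> a x y z; exact: h1.
  - by move=> x y; exact: h2.
  - by [].
  - by move=> x /h4 hx; apply: val_inj.
exists K, ipK, A0; split.
- split => //.
  move=> u hu.
  have [l hl] := hcomp (fun n => spval (u n)) hu.
  have [kE sE] : exists k, sqb ipH ipH E k.
    by eexists; apply: sqb_comp; [apply: sqb_comp; [exact: sBi|exact: sN]|exact: sM].
  have [cE hcE hE] := sq_bnd nH nH sE.
  exists (@SubSp _ H P P0 PD (E l) (PE l)) => e he.
  have hc1 : 0 < cE + 1 by rewrite ltr_wpDl.
  have [N1 hN1] := hl (e / (cE + 1)) (divr_gt0 he hc1).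
  exists N1 => n hn.
  rewrite /ipnorm /ipK /=.
  change (ipnorm ipH (spval (u n) - E l) < e).
  rewrite -Efix -(linB ED).
  apply: le_lt_trans (hE _) _.
  have ht : 0 <= ipnorm ipH (spval (u n) - l) by rewrite /ipnorm sqrtC_ge0.
  apply: (le_lt_trans (y := (cE + 1) * ipnorm ipH (spval (u n) - l))).
    by apply: ler_wpM2r => //; rewrite lerDl.
  rewrite [X in _ < X](_ : e = (cE + 1) * (e / (cE + 1))); last by rewrite mulrC divfK // gt_eqF.
  by rewrite ltr_pM2l //; exact: hN1.
- exists A0i; split.
  + apply: (mk_bounded nK nK (k := kB)).
      by split=> *; apply: val_inj; rewrite /= ?BD ?BZ.
    by split; [case: sB|move=> x; case: sB => _; apply].
  + apply: (mk_bounded nK nK (k := kBi)).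
      by split=> *; apply: val_inj; rewrite /= ?BiD ?BiZ.
    by split; [case: sBi|move=> x; case: sBi => _; apply].
  + by move=> x; apply: val_inj; rewrite /= BiB.
  + by move=> x; apply: val_inj; rewrite /= BBi.
pose S := fun p : (K * K)%type => spval p.1 + N (spval p.2).
pose Si := fun h => (@SubSp _ H P P0 PD (E h) (PE h), @SubSp _ H P P0 PD (- M (Bi h)) (PMB h)).
have ESp (p : (K * K)%type) : E (S p) = spval p.1 by rewrite /S ED EN addr0 Efix.
have MEx (x : K) : M (spval x) = 0 by rewrite -Efix /E MM.
have MBiEx (x : K) : M (Bi (spval x)) = 0 by rewrite -Efix /E BiM MN MM oppr0.
have NMx (x : K) : N (M (spval x)) = 0 by rewrite MEx N0.
have SiS p : Si (S p) = p.
  case: p => x y; rewrite /Si; congr pair; apply: val_inj => /=.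
    exact: (ESp (x, y)).
  rewrite /S /= BiD MD MBiEx add0r BiNx MN opprK.
  exact: Efix.
exists S, Si; split; first split.
- have [kE sE] : exists k, sqb ipH ipH E k.
    by eexists; apply: sqb_comp; [apply: sqb_comp; [exact: sBi|exact: sN]|exact: sM].
  apply: (mk_bounded _ nH (k := 2 + 2 * kN)).
  + by move=> p; rewrite /ip_sum addr_ge0.
  + split=> [p q|a p]; rewrite /S /=.
      by rewrite ND addrACA.
    by rewrite NZ scalerDr.
  + split; first by case: sN => hk _; rewrite addr_ge0 // mulr_ge0.
    move=> [x y]; rewrite /S /ip_sum /=.
    apply: le_trans (ip_par hip _ _) _.
    case: sN => hk hN.
    by apply: ineqS; [exact: nH|exact: nH|exact: hk|exact: hN].
- have [kE [hkE sE]] : exists k, sqb ipH ipH E k.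
    by eexists; apply: sqb_comp; [apply: sqb_comp; [exact: sBi|exact: sN]|exact: sM].
  have [kMB [hkMB sMB]] : exists k, sqb ipH ipH (fun h => M (Bi h)) k.
    by eexists; apply: sqb_comp; [exact: sBi|exact: sM].
  apply: (mk_bounded nH _ (k := kE + kMB)).
  + by move=> p; rewrite /ip_sum addr_ge0.
  + split=> [p q|a p]; rewrite /Si; congr pair; apply: val_inj => /=.
    * exact: ED.
    * by rewrite BiD MD opprD.
    * exact: EZ.
    * by rewrite BiZ MZ scalerN.
  + split; first by rewrite addr_ge0.
    move=> h; rewrite /Si /ip_sum /ipK /= (ip_opp hip) mulrDl.
    by apply: lerD; [exact: sE|exact: sMB].
- exact: SiS.
- by move=> h; rewrite /S /Si /= NN' /E -hBMN BBi.
- move=> [x y]; rewrite /Si /dsum_neg; congr pair; apply: val_inj => /=.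
    by rewrite EB ESp.
  rewrite BiB /S /= MD MEx add0r hBMN NMx subr0.
  by [].
Qed.

Unset Implicit Arguments. Set Strict Implicit.

Theorem proposition2p03 (R : realType) (H : lmodType R[i]) (ipH : H -> H -> R[i])
  (hH : is_Hilbert ipH) (B : H -> H) (hB : invertible_op ipH ipH B) :
  (exists M N : H -> H,
      [/\ bounded_op ipH ipH M, bounded_op ipH ipH N,
          (forall x, M (M x) = 0), (forall x, N (N x) = 0)
        & forall x, B x = M (N x) - N (M x)])
  <->
  (exists (K : lmodType R[i]) (ipK : K -> K -> R[i]) (A0 : K -> K),
      [/\ is_Hilbert ipK, invertible_op ipK ipK A0
        & exists (S : (K * K)%type -> H) (Si : H -> (K * K)%type),
            bounded_inverse (ip_sum ipK) ipH S Si /\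
            forall p, Si (B (S p)) = dsum_neg A0 p]).
Proof. split; [exact: dir_ab | exact: dir_ba]. Qed.
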